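(* Let $r,s_1,s_2\in\mathbb{N}_+$. Let $\boldsymbol B_0\in\mathbb{R}^{d_1\times d_2}$ be arbitrary and $\boldsymbol B_1,\dots,\boldsymbol B_r\in\{0,1\}^{d_1\times d_2}$ rank-1 matrices with $\langle\boldsymbol B_s,\boldsymbol B_{s'}\rangle=0$ for $s\ne s'$ and whose supports together involve at most $s_1$ rows and at most $s_2$ columns. Let $g_1,\dots,g_r:[0,1]\to\mathbb{R}$ be functions at least one of which is strictly monotonic. Draw $\pi\sim\mathrm{Unif}[0,1]$ and, given $\pi$, set $\boldsymbol X_\pi=\boldsymbol B_0+\sum_{s=1}^r g_s(\pi)\boldsymbol B_s$ (the noiseless case $\sigma=0$ of $\boldsymbol X_\pi=\boldsymbol B_0+\sum_s g_s(\pi)\boldsymbol B_s+\sigma\boldsymbol E$) and $Y_\pi\sim\mathrm{Bernoulli}(\pi)$ with $Y_\pi$ independent of $\boldsymbol X_\pi$ given $\pi$. Let $\mathbb{P}_{\boldsymbol X,Y}$ be the induced joint distribution of $(\boldsymbol X,Y)=(\boldsymbol X_\pi,Y_\pi)$, $\mathcal{X}=\{\boldsymbol X_\pi:\pi\in[0,1]\}$, and $f(\boldsymbol X)=\mathbb{E}(Y|\boldsymbol X)$ on $\mathcal{X}$. Then $f\in\mathcal F_{\mathrm{sgn}}(r,s_1,s_2)$.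
   Context: $\mathrm{sgn}(x)=1$ if $x>0$, $-1$ otherwise. $\Phi(r,s_1,s_2)=\{\boldsymbol X\mapsto\langle\boldsymbol X,\boldsymbol B\rangle+b:\mathrm{rank}(\boldsymbol B)\le r,\ \boldsymbol B\text{ has at most }s_1\text{ nonzero rows and }s_2\text{ nonzero columns},\ b\in\mathbb{R}\}$, with $\langle\boldsymbol X,\boldsymbol B\rangle=\mathrm{tr}(\boldsymbol X\boldsymbol B^T)$. $\mathcal F_{\mathrm{sgn}}(r,s_1,s_2)$ is the set of functions $f:\mathcal{X}\to[-1,1]$ such that for every level $\pi'\in[-1,1]$ there is $\phi\in\Phi(r,s_1,s_2)$ with $\mathrm{sgn}(f(\boldsymbol X)-\pi')=\mathrm{sgn}\,\phi(\boldsymbol X)$ for all $\boldsymbol X\in\mathcal{X}$. *)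

(* Defs.v *)
From HB Require Import structures.
From mathcomp Require Import all_boot all_order all_algebra.
From mathcomp Require Import reals.
Set Implicit Arguments. Unset Strict Implicit. Unset Printing Implicit Defensive.
Import Order.TTheory GRing.Theory Num.Theory.
Local Open Scope ring_scope.

Section Defs.
Variable R : realType.
Variables d1 d2 : nat.

Definition minner (X B : 'M[R]_(d1, d2)) : R := \tr (X *m B^T).

Definition sgn (x : R) : R := if 0 < x then 1 else -1.

Definition nz_rows (B : 'M[R]_(d1, d2)) : {set 'I_d1} :=
  [set i | [exists j, B i j != 0]].
Definition nz_cols (B : 'M[R]_(d1, d2)) : {set 'I_d2} :=
  [set j | [exists i, B i j != 0]].

(* (B, b) parametrizes an element X |-> <X,B> + b of Phi(r, s1, s2) *)
Definition in_Phi (r s1 s2 : nat) (B : 'M[R]_(d1, d2)) (b : R) : Prop :=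
  (\rank B <= r)%N /\ (#|nz_rows B| <= s1)%N /\ (#|nz_cols B| <= s2)%N.

Definition F_sgn (calX : 'M[R]_(d1, d2) -> Prop) (r s1 s2 : nat)
    (f : 'M[R]_(d1, d2) -> R) : Prop :=
  (forall X, calX X -> -1 <= f X <= 1) /\
  forall pi' : R, -1 <= pi' <= 1 ->
    exists (B : 'M[R]_(d1, d2)) (b : R), in_Phi r s1 s2 B b /\
      forall X, calX X -> sgn (f X - pi') = sgn (minner X B + b).

Definition Xpi (r : nat) (B0 : 'M[R]_(d1, d2)) (Bs : 'I_r -> 'M[R]_(d1, d2))
    (g : 'I_r -> R -> R) (p : R) : 'M[R]_(d1, d2) :=
  B0 + \sum_(s < r) g s p *: Bs s.

Definition in01 (p : R) : Prop := 0 <= p <= 1.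
Definition calX_of r B0 Bs g (X : 'M[R]_(d1, d2)) : Prop :=
  exists p, in01 p /\ X = @Xpi r B0 Bs g p.

Definition bernoulli_mean (p : R) : R := p * 1 + (1 - p) * 0.

(* f(X) = E(Y | X) on calX: whenever the observation X = X_p0 determines the
   latent variable (the fiber {p in [0,1] : X_p = X_p0} is {p0}), the
   conditional expectation of Y given X = X_p0 is E(Y | pi = p0). *)
Definition is_cond_exp_Y_given_X r B0 Bs g (f : 'M[R]_(d1, d2) -> R) : Prop :=
  forall p0, in01 p0 ->
    (forall p, in01 p -> @Xpi r B0 Bs g p = Xpi B0 Bs g p0 -> p = p0) ->
    f (Xpi B0 Bs g p0) = bernoulli_mean p0.

Definition strictly_monotone_on01 (h : R -> R) : Prop :=
  (forall x y, in01 x -> in01 y -> x < y -> h x < h y) \/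
  (forall x y, in01 x -> in01 y -> x < y -> h y < h x).

End Defs.

(* Main.v *)
Require Import Defs.
From HB Require Import structures.
From mathcomp Require Import all_boot all_order all_algebra.
From mathcomp Require Import reals.
Import Order.TTheory GRing.Theory Num.Theory.
Local Open Scope ring_scope.

Lemma minnerE (R : realType) d1 d2 (X M : 'M[R]_(d1, d2)) :
  minner X M = \sum_i \sum_j X i j * M i j.
Proof.
rewrite /minner /mxtrace; apply: eq_bigr => i _; rewrite mxE.
by apply: eq_bigr => j _; rewrite mxE.
Qed.

Lemma minner_delta (R : realType) d1 d2 (X : 'M[R]_(d1, d2)) c i0 j0 :
  minner X (c *: delta_mx i0 j0) = c * X i0 j0.
Proof.
rewrite minnerE (bigD1 i0) //= (bigD1 j0) //= big1; last first.
  by move=> j /negbTE Hj; rewrite !mxE eqxx Hj /= mulr0 mulr0.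
rewrite big1; last first.
  move=> i /negbTE Hi; apply: big1 => j _; by rewrite !mxE Hi /= mulr0 mulr0.
by rewrite !mxE !eqxx /= mulr1 !addr0 mulrC.
Qed.

Lemma in_Phi_delta (R : realType) d1 d2 r s1 s2 c (i0 : 'I_d1) (j0 : 'I_d2) b :
  (0 < r)%N -> (0 < s1)%N -> (0 < s2)%N ->
  in_Phi r s1 s2 (c *: delta_mx i0 j0 : 'M[R]_(d1, d2)) b.
Proof.
move=> hr h1 h2; split; [|split].
- apply: leq_trans (mxrank_scale _ _) _; by rewrite mxrank_delta.
- apply: leq_trans h1; rewrite -(cards1 i0); apply: subset_leq_card.
  apply/subsetP => k; rewrite inE => /existsP [l]; rewrite !mxE.
  case: (k =P i0) => [-> _|_]; first by rewrite inE.
  by rewrite /= mulr0 eqxx.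
- apply: leq_trans h2; rewrite -(cards1 j0); apply: subset_leq_card.
  apply/subsetP => l; rewrite inE => /existsP [k]; rewrite !mxE.
  case: (l =P j0) => [-> _|_]; first by rewrite inE.
  by rewrite andbF /= mulr0 eqxx.
Qed.

Lemma sgn_eq (R : realType) (x y : R) : (0 < x) = (0 < y) -> sgn x = sgn y.
Proof. by rewrite /sgn => ->. Qed.

Theorem proposition4 (R : realType) (d1 d2 r s1 s2 : nat)
  (B0 : 'M[R]_(d1, d2)) (Bs : 'I_r -> 'M[R]_(d1, d2)) (g : 'I_r -> R -> R)
  (f : 'M[R]_(d1, d2) -> R) :
  (0 < r)%N -> (0 < s1)%N -> (0 < s2)%N ->
  (forall s i j, Bs s i j = 0 \/ Bs s i j = 1) ->
  (forall s, \rank (Bs s) = 1%N) ->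
  (forall s s', s != s' -> minner (Bs s) (Bs s') = 0) ->
  (#|[set i | [exists s, exists j, Bs s i j != 0%R]]| <= s1)%N ->
  (#|[set j | [exists s, exists i, Bs s i j != 0%R]]| <= s2)%N ->
  (exists s, strictly_monotone_on01 (g s)) ->
  is_cond_exp_Y_given_X B0 Bs g f ->
  F_sgn (calX_of B0 Bs g) r s1 s2 f.
Proof.
move=> hr h1 h2 H01 Hrk Hort _ _ [s0 Hmon] Hf.
have ge0 : forall s i j, 0 <= Bs s i j.
  by move=> s i j; case: (H01 s i j) => ->.
have [[i0 j0] /= Hnz | H0] := pickP (fun ij : 'I_d1 * 'I_d2 => Bs s0 ij.1 ij.2 != 0); last first.
  have : Bs s0 = 0.
    by apply/matrixP => i j; move/negbFE: (H0 (i, j)) => /eqP ->; rewrite mxE.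
  by move=> E; move: (Hrk s0); rewrite E mxrank0.
have E1 : Bs s0 i0 j0 = 1 by case: (H01 s0 i0 j0) => // E; rewrite E eqxx in Hnz.
have Eo : forall s, s != s0 -> Bs s i0 j0 = 0.
  move=> s /negbTE Hs.
  have := Hort s0 s; rewrite eq_sym Hs => /(_ isT); rewrite minnerE => Hsum.
  have Hi := psumr_eq0P (fun i _ => sumr_ge0 _ (fun j _ => mulr_ge0 (ge0 s0 i j) (ge0 s i j))) Hsum (i := i0) isT.
  have := psumr_eq0P (fun j _ => mulr_ge0 (ge0 s0 i0 j) (ge0 s i0 j)) Hi (i := j0) isT.
  by rewrite E1 mul1r.

have Hent : forall p, Xpi B0 Bs g p i0 j0 = B0 i0 j0 + g s0 p.
  move=> p; rewrite /Xpi mxE summxE (bigD1 s0) //= big1 ?addr0.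
    by rewrite mxE E1 mulr1.
  by move=> s Hs; rewrite mxE Eo // mulr0.
have Hinj : forall p q, in01 p -> in01 q -> g s0 p = g s0 q -> p = q.
  move=> p q hp hq Ehpq; case: (ltgtP p q) => // Hlt; exfalso.
  - by case: Hmon => H; have := H _ _ hp hq Hlt; rewrite Ehpq ltxx.
  - by case: Hmon => H; have := H _ _ hq hp Hlt; rewrite Ehpq ltxx.
have fX : forall p, in01 p -> f (Xpi B0 Bs g p) = p.
  move=> p hp; rewrite Hf //; first by rewrite /bernoulli_mean mulr1 mulr0 addr0.
  move=> q hq Eq; apply: Hinj => //.
  by have := congr1 (fun M : 'M[R]_(d1, d2) => M i0 j0) Eq; rewrite /= !Hent => /addrI.
split.
  move=> X [p [hp ->]]; rewrite fX //; case/andP: hp => a b.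
  by rewrite b andbT (le_trans _ a) // lerN10.
move=> pi' /andP [Hl Hu].
have [Hneg|Hnn] := ltP pi' 0.
  exists (0 *: delta_mx i0 j0), 1; split; first exact: in_Phi_delta.
  move=> X [p [hp ->]]; rewrite fX // minner_delta mul0r add0r; apply: sgn_eq.
  rewrite ltr01 subr_gt0; case/andP: hp => a _; exact: lt_le_trans a.
have [Hge1|Hlt1] := leP 1 pi'.
  exists (0 *: delta_mx i0 j0), (-1); split; first exact: in_Phi_delta.
  move=> X [p [hp ->]]; rewrite fX // minner_delta mul0r add0r; apply: sgn_eq.
  rewrite oppr_gt0 ltr10 subr_gt0; case/andP: hp => _ b.
  by apply/negbTE; rewrite -leNgt (le_trans b).
have hpi : in01 pi' by rewrite /in01 Hnn (ltW Hlt1).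
case: Hmon => Hm.
- exists (1 *: delta_mx i0 j0), (- (B0 i0 j0 + g s0 pi')); split; first exact: in_Phi_delta.
  move=> X [p [hp ->]]; rewrite fX // minner_delta mul1r Hent; apply: sgn_eq.
  rewrite !subr_gt0 ltrD2l; case: (ltgtP p pi') => H.
  + by apply/esym/negbTE; rewrite -leNgt ltW // Hm.
  + by rewrite Hm.
  + by rewrite H ltxx.
- exists ((-1) *: delta_mx i0 j0), (B0 i0 j0 + g s0 pi'); split; first exact: in_Phi_delta.
  move=> X [p [hp ->]]; rewrite fX // minner_delta mulN1r Hent; apply: sgn_eq.
  rewrite subr_gt0 [X in _ = (0 < X)]addrC subr_gt0 ltrD2l; case: (ltgtP p pi') => H.
  + by apply/esym/negbTE; rewrite -leNgt ltW // Hm.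
  + by rewrite Hm.
  + by rewrite H ltxx.
Qed.
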